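(* Let $R$ be a commutative ring with $\mathbb{Q}\subseteq R$, $\mathcal{A}$ a commutative unital $R$-algebra, and $\mathcal{E}$ a finitely generated projective $\mathcal{A}$-module with a symmetric, strongly nondegenerate, full $\mathcal{A}$-bilinear form $\langle\cdot,\cdot\rangle$. Let $[\cdot,\cdot]$ be the bracket on $\mathcal{C}^\bullet(\mathcal{E})$ described in the context. Then there exists a unique associative, graded commutative, $R$-bilinear product $\wedge$ of degree zero on $\mathcal{C}^\bullet(\mathcal{E})$ with the following properties: - $a\wedge b=ab=b\wedge a$ for $a,b\in\mathcal{A}$; - $a\wedge x=ax=x\wedge a$ for $a\in\mathcal{A}$, $x\in\mathcal{E}$; - $[\mathsf{C}_1\wedge\mathsf{C}_2,x]=(-1)^s[\mathsf{C}_1,x]\wedge\mathsf{C}_2+\mathsf{C}_1\wedge[\mathsf{C}_2,x]$ for all $\mathsf{C}_1\in\mathcal{C}^r(\mathcal{E})$, $\mathsf{C}_2\in\mathcal{C}^s(\mathcal{E})$, $x\in\mathcal{E}$.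
   Context: Strongly nondegenerate: $\mathcal{E}\to\operatorname{Hom}_{\mathcal{A}}(\mathcal{E},\mathcal{A})$ is an isomorphism. Full: every $a\in\mathcal{A}$ is a finite sum $\sum_i\langle x_i,y_i\rangle$. $\operatorname{Der}(\mathcal{A})$: $R$-linear derivations of $\mathcal{A}$. $\mathcal{C}^0(\mathcal{E})=\mathcal{A}$ and $\mathcal{C}^1(\mathcal{E})=\mathcal{E}$. For $r\ge2$, $\mathcal{C}^r(\mathcal{E})$ is the set of $\mathsf{C}\in\operatorname{Hom}_R(\mathcal{E}^{\otimes_R(r-1)},\mathcal{E})$ admitting an $R$-multilinear symbol $\sigma_{\mathsf{C}}:\mathcal{E}^{\otimes(r-2)}\to\operatorname{Der}(\mathcal{A})$ with two properties: (1) $\sigma_{\mathsf{C}}(x_1,\dots,x_{r-2})\langle u,w\rangle=\langle\mathsf{C}(x_1,\dots,x_{r-2},u),w\rangle+\langle u,\mathsf{C}(x_1,\dots,x_{r-2},w)\rangle$; (2) for $r\ge3$ and $1\le i\le r-2$, $\langle\mathsf{C}(\dots,x_i,x_{i+1},\dots)+\mathsf{C}(\dots,x_{i+1},x_i,\dots),u\rangle=\sigma_{\mathsf{C}}(x_1,\dots,\widehat{x_i},\widehat{x_{i+1}},\dots,x_{r-1},u)\langle x_i,x_{i+1}\rangle$. $\mathcal{C}^\bullet(\mathcal{E})=\bigoplus_r\mathcal{C}^r(\mathcal{E})$. $i_x\mathsf{C}$ inserts $x$ into the first argument of $\mathsf{C}\in\mathcal{C}^r$, $r\ge2$. $[\cdot,\cdot]$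 is the unique $R$-bilinear graded skew-symmetric map $\mathcal{C}^r\times\mathcal{C}^s\to\mathcal{C}^{r+s-2}$ with: - $[a,b]=0$ and $[a,x]=0=[x,a]$; - $[x,y]=\langle x,y\rangle$; - $[\mathsf{D},a]=\sigma_{\mathsf{D}}(a)=-[a,\mathsf{D}]$ for $\mathsf{D}\in\mathcal{C}^2$; - $[\mathsf{C},x]=i_x\mathsf{C}=(-1)^{r+1}[x,\mathsf{C}]$ for $\mathsf{C}\in\mathcal{C}^r$ with $r\ge2$; - $[[\mathsf{C}_1,\mathsf{C}_2],x]=(-1)^s[[\mathsf{C}_1,x],\mathsf{C}_2]+[\mathsf{C}_1,[\mathsf{C}_2,x]]$. *)

(* Defs.v *)
From HB Require Import structures.
From mathcomp Require Import all_boot all_order all_algebra.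
Set Implicit Arguments. Unset Strict Implicit. Unset Printing Implicit Defensive.
Import Order.TTheory GRing.Theory Num.Theory.
Local Open Scope ring_scope.

(* R contains Q: every positive integer is invertible in R. *)
Definition Qalgebra (R : comUnitRingType) : Prop :=
  forall n : nat, (0 < n)%N -> (n%:R : R) \is a GRing.unit.

(* Finitely generated projective A-module: a direct summand of A^n. *)
Definition fgprojective (A : comNzRingType) (E : lmodType A) : Prop :=
  exists (n : nat) (i : E -> 'rV[A]_n) (p : 'rV[A]_n -> E),
    (forall (a : A) x y, i (a *: x + y) = a *: i x + i y) /\
    (forall (a : A) v w, p (a *: v + w) = a *: p v + p w) /\
    (forall x, p (i x) = x).

(* The carrier in which the direct sum C^.(E) lives:
   an element is a pair (c0, F) where c0 : A is the degree-0 component and,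
   for k >= 0, the restriction of F : seq E -> E to lists of length k is the
   degree-(k+1) component (an (R-multilinear) map E^(k) -> E; degree 1 = E,
   viewed as the value F [::]). *)
Definition Raw (A : Type) (E : Type) : Type := (A * (seq E -> E))%type.

Section Cochains.
Variables (R : comUnitRingType) (A : comAlgType R) (E : lmodType A).
Variable g : E -> E -> A.

Definition Rsc (c : R) (x : E) : E := (c%:A : A) *: x.

Definition Alinear (f : E -> A) : Prop :=
  forall (a : A) x y, f (a *: x + y) = a * f x + f y.

Definition form_bilinear : Prop :=
  (forall (a : A) x y z, g (a *: x + y) z = a * g x z + g y z) /\
  (forall (a : A) x y z, g z (a *: x + y) = a * g z x + g z y).

Definition form_symmetric : Prop := forall x y, g x y = g y x.

(* x |-> <x, .> is a bijection E -> Hom_A(E, A) *)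
Definition strongly_nondegenerate : Prop :=
  (forall x y, (forall z, g x z = g y z) -> x = y) /\
  (forall f : E -> A, Alinear f -> exists x, forall z, f z = g x z).

Definition form_full : Prop :=
  forall a : A, exists s : seq (E * E), a = \sum_(p <- s) g p.1 p.2.

Definition derivation (d : A -> A) : Prop :=
  (forall (c : R) a b, d (c%:A * a + b) = c%:A * d a + d b) /\
  (forall a b, d (a * b) = d a * b + a * d b).

Definition multilin_E (n : nat) (F : seq E -> E) : Prop :=
  forall (l1 l2 : seq E) (c : R) (x y : E), (size l1 + size l2).+1 = n ->
    F (l1 ++ (Rsc c x + y) :: l2) = Rsc c (F (l1 ++ x :: l2)) + F (l1 ++ y :: l2).

Definition multilin_D (n : nat) (s : seq E -> A -> A) : Prop :=
  forall (l1 l2 : seq E) (c : R) (x y : E) (a : A), (size l1 + size l2).+1 = n ->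
    s (l1 ++ (Rsc c x + y) :: l2) a
      = c%:A * s (l1 ++ x :: l2) a + s (l1 ++ y :: l2) a.

(* s is a symbol for the degree-r cochain F (r >= 2): conditions (1), (2) *)
Definition symbol_of (r : nat) (F : seq E -> E) (s : seq E -> A -> A) : Prop :=
  multilin_D (r - 2) s /\
  (forall l, (size l).+2 = r -> derivation (s l)) /\
  (forall l u w, (size l).+2 = r ->
     s l (g u w) = g (F (rcons l u)) w + g u (F (rcons l w))) /\
  (forall l1 l2 x y u, (size l1 + size l2).+3 = r ->
     g (F (l1 ++ x :: y :: l2) + F (l1 ++ y :: x :: l2)) u
       = s (l1 ++ rcons l2 u) (g x y)).

Definition isC (r : nat) (u : Raw A E) : Prop :=
  if r is 0 then (forall l, u.2 l = 0)
  else u.1 = 0 /\ (forall l, (size l).+1 != r -> u.2 l = 0) /\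
       ((2 <= r)%N -> multilin_E (r - 1) u.2 /\ exists s, symbol_of r u.2 s).

Definition inCdot (u : Raw A E) : Prop :=
  (exists N, forall l, (N <= size l)%N -> u.2 l = 0) /\
  (forall k, isC k.+1 (0, fun l => if size l == k then u.2 l else 0)).

Definition inA (a : A) : Raw A E := (a, fun _ => 0).
Definition inE (x : E) : Raw A E := (0, fun l => if l is [::] then x else 0).
Definition rzero : Raw A E := (0, fun _ => 0).
Definition radd (u v : Raw A E) : Raw A E := (u.1 + v.1, fun l => u.2 l + v.2 l).
Definition rscale (c : R) (u : Raw A E) : Raw A E :=
  (c%:A * u.1, fun l => Rsc c (u.2 l)).
Definition ropp (u : Raw A E) : Raw A E := rscale (-1) u.
Definition ins (x : E) (u : Raw A E) : Raw A E := (0, fun l => u.2 (x :: l)).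

Definition is_bracket (br : Raw A E -> Raw A E -> Raw A E) : Prop :=
  (forall (c : R) u v w, inCdot u -> inCdot v -> inCdot w ->
     br (radd (rscale c u) v) w = radd (rscale c (br u w)) (br v w) /\
     br w (radd (rscale c u) v) = radd (rscale c (br w u)) (br w v)) /\
  (forall r s u v, isC r u -> isC s v -> isC (r + s - 2) (br u v)) /\
  (forall r s u v, isC r u -> isC s v ->
     br u v = rscale (- (-1) ^+ (r * s)) (br v u)) /\
  (forall a b, br (inA a) (inA b) = rzero) /\
  (forall a x, br (inA a) (inE x) = rzero /\ br (inE x) (inA a) = rzero) /\
  (forall x y, br (inE x) (inE y) = inA (g x y)) /\
  (forall D s a, isC 2 D -> symbol_of 2 D.2 s ->
     br D (inA a) = inA (s [::] a) /\ br D (inA a) = ropp (br (inA a) D)) /\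
  (forall r C x, (2 <= r)%N -> isC r C ->
     br C (inE x) = ins x C /\
     br C (inE x) = rscale ((-1) ^+ r.+1) (br (inE x) C)) /\
  (forall r s C1 C2 x, isC r C1 -> isC s C2 ->
     br (br C1 C2) (inE x)
       = radd (rscale ((-1) ^+ s) (br (br C1 (inE x)) C2))
              (br C1 (br C2 (inE x)))).

Definition is_wedge (br wd : Raw A E -> Raw A E -> Raw A E) : Prop :=
  (forall (c : R) u v w, inCdot u -> inCdot v -> inCdot w ->
     wd (radd (rscale c u) v) w = radd (rscale c (wd u w)) (wd v w) /\
     wd w (radd (rscale c u) v) = radd (rscale c (wd w u)) (wd w v)) /\
  (forall r s u v, isC r u -> isC s v -> isC (r + s) (wd u v)) /\
  (forall u v w, inCdot u -> inCdot v -> inCdot w ->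
     wd (wd u v) w = wd u (wd v w)) /\
  (forall r s u v, isC r u -> isC s v ->
     wd u v = rscale ((-1) ^+ (r * s)) (wd v u)) /\
  (forall a b, wd (inA a) (inA b) = inA (a * b) /\ wd (inA b) (inA a) = inA (a * b)) /\
  (forall a x, wd (inA a) (inE x) = inE (a *: x) /\ wd (inE x) (inA a) = inE (a *: x)) /\
  (forall r s C1 C2 x, isC r C1 -> isC s C2 ->
     br (wd C1 C2) (inE x)
       = radd (rscale ((-1) ^+ s) (wd (br C1 (inE x)) C2))
              (wd C1 (br C2 (inE x)))).

End Cochains.

(* Main.v *)
Require Import Defs.
From HB Require Import structures.
From mathcomp Require Import all_boot all_order all_algebra.
From Stdlib Require Import FunctionalExtensionality IndefiniteDescription.
From mathcomp Require Import zify ring.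
Set Implicit Arguments. Unset Strict Implicit. Unset Printing Implicit Defensive.
Import GRing.Theory.
Local Open Scope ring_scope.

Section W.
Variables (R : comUnitRingType) (A : comAlgType R) (E : lmodType A).
Variable g : E -> E -> A.
Hypothesis gbil : form_bilinear g.

Local Notation Raw := (Raw A E).
Local Notation rz := (rzero E).

Lemma rawE (u v : Raw) : u.1 = v.1 -> (forall l, u.2 l = v.2 l) -> u = v.
Proof. case: u => a f; case: v => b h /= -> H; congr pair; exact: functional_extensionality. Qed.

Lemma gDl x y z : g (x + y) z = g x z + g y z.
Proof. by have := (gbil.1 1 x y z); rewrite scale1r mul1r. Qed.
Lemma g0l z : g 0 z = 0.
Proof. have H := gDl 0 0 z; rewrite addr0 in H. by have := subrr (g 0 z); rewrite {1}H addrK. Qed.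
Lemma gZl a x z : g (a *: x) z = a * g x z.
Proof. by have := (gbil.1 a x 0 z); rewrite addr0 g0l addr0. Qed.
Lemma gDr x y z : g z (x + y) = g z x + g z y.
Proof. by have := (gbil.2 1 x y z); rewrite scale1r mul1r. Qed.
Lemma g0r z : g z 0 = 0.
Proof. have H := gDr 0 0 z; rewrite addr0 in H. by have := subrr (g z 0); rewrite {1}H addrK. Qed.
Lemma gZr a x z : g z (a *: x) = a * g z x.
Proof. by have := (gbil.2 a x 0 z); rewrite addr0 g0r addr0. Qed.
Lemma gNl x z : g (- x) z = - g x z.
Proof. by rewrite -scaleN1r gZl mulN1r. Qed.
Lemma gNr x z : g z (- x) = - g z x.
Proof. by rewrite -scaleN1r gZr mulN1r. Qed.
Lemma gRl c x z : g (Rsc c x) z = c%:A * g x z.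
Proof. exact: gZl. Qed.

Lemma gRr c x z : g z (Rsc c x) = c%:A * g z x.
Proof. exact: gZr. Qed.

Lemma Rsc1 (x : E) : Rsc 1 x = x.
Proof. by rewrite /Rsc scale1r scale1r. Qed.
Lemma RscD c (x y : E) : Rsc c (x + y) = Rsc c x + Rsc c y.
Proof. by rewrite /Rsc scalerDr. Qed.
Lemma Rsc0 c : Rsc c (0 : E) = 0.
Proof. by rewrite /Rsc scaler0. Qed.
Lemma RscM c d (x : E) : Rsc (c * d) x = Rsc c (Rsc d x).
Proof. by rewrite /Rsc scalerA mulr_algl -scalerA. Qed.
Lemma RscN1 (x : E) : Rsc (-1) x = - x.
Proof. by rewrite /Rsc scaleN1r scaleN1r. Qed.
Lemma RscZ c (a : A) (x : E) : Rsc c (a *: x) = a *: Rsc c x.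
Proof. by rewrite /Rsc !scalerA mulrC. Qed.
Lemma RscDl c d (x : E) : Rsc (c + d) x = Rsc c x + Rsc d x.
Proof. by rewrite /Rsc scalerDl scalerDl. Qed.

Definition ix (n : nat) (x : E) (u : Raw) : Raw :=
  match n with 0 => rz | 1 => inA E (g (u.2 [::]) x) | _ => ins x u end.

Definition sg (n : nat) : R := (-1) ^+ n.

Fixpoint wl (l : seq E) (p q : nat) (u v : Raw) {struct l} : E :=
  match l with
  | [::] => if (p == 0)%N && (q == 1)%N then u.1 *: v.2 [::]
            else if (p == 1)%N && (q == 0)%N then v.1 *: u.2 [::] else 0
  | x :: l' => Rsc (sg q) (wl l' p.-1 q (ix p x u) v) + wl l' p q.-1 u (ix q x v)
  end.

Definition wedgeh (p q : nat) (u v : Raw) : Raw :=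
  (if (p == 0)%N && (q == 0)%N then u.1 * v.1 else 0, fun l => wl l p q u v).

Lemma ix_rz n x : ix n x rz = rz.
Proof. by case: n => [|[|n]] //=; rewrite g0l. Qed.

Lemma wl_rzl l p q v : wl l p q rz v = 0.
Proof.
elim: l p q v => [|x l IH] p q v /=; first by rewrite scale0r scaler0; do ?case: ifP.
by rewrite ix_rz !IH Rsc0 addr0.
Qed.
Lemma wl_rzr l p q u : wl l p q u rz = 0.
Proof.
elim: l p q u => [|x l IH] p q u /=; first by rewrite scale0r scaler0; do ?case: ifP.
by rewrite ix_rz !IH Rsc0 addr0.
Qed.

Lemma wl_off l p q u v : (size l).+1 != (p + q)%N -> wl l p q u v = 0.
Proof.
elim: l p q u v => [|x l IH] p q u v /=.
  by case: p => [|[|p]]; case: q => [|[|q]].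
move=> H; case: p H => [|p] H.
  by rewrite /= wl_rzl Rsc0 add0r IH //; case: q H => [|q] //=; lia.
rewrite IH /=; last by lia.
rewrite Rsc0 add0r; case: q H => [|q] H; first by rewrite /= wl_rzr.
by rewrite IH //=; lia.
Qed.


Lemma ix_radd n x u v : ix n x (radd u v) = radd (ix n x u) (ix n x v).
Proof.
by case: n => [|[|n]]; apply: rawE => //= *; rewrite ?addr0 ?gDl.
Qed.

Lemma ix_rscale n x c u : ix n x (rscale c u) = rscale c (ix n x u).
Proof.
by case: n => [|[|n]]; apply: rawE => //= *; rewrite ?mulr0 ?Rsc0 ?gRl.
Qed.

Lemma wl_raddl l p q u1 u2 v : wl l p q (radd u1 u2) v = wl l p q u1 v + wl l p q u2 v.
Proof.
elim: l p q u1 u2 v => [|x l IH] p q u1 u2 v /=.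
  case: ifP => _; first by rewrite scalerDl.
  by case: ifP => _; rewrite ?scalerDr ?addr0.
by rewrite ix_radd !IH RscD addrACA.
Qed.

Lemma wl_raddr l p q u v1 v2 : wl l p q u (radd v1 v2) = wl l p q u v1 + wl l p q u v2.
Proof.
elim: l p q u v1 v2 => [|x l IH] p q u v1 v2 /=.
  case: ifP => _; first by rewrite scalerDr.
  by case: ifP => _; rewrite ?scalerDl ?addr0.
by rewrite ix_radd !IH RscD addrACA.
Qed.

Lemma wl_rscalel l p q c u v : wl l p q (rscale c u) v = Rsc c (wl l p q u v).
Proof.
elim: l p q u v => [|x l IH] p q u v /=.
  case: ifP => _; first by rewrite /Rsc scalerA mulr_algl.
  by case: ifP => _; rewrite ?Rsc0 // /Rsc !scalerA mulrC.
by rewrite ix_rscale !IH RscD -!RscM mulrC.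
Qed.

Lemma wl_rscaler l p q c u v : wl l p q u (rscale c v) = Rsc c (wl l p q u v).
Proof.
elim: l p q u v => [|x l IH] p q u v /=.
  case: ifP => _; first by rewrite /Rsc !scalerA mulrC.
  by case: ifP => _; rewrite ?Rsc0 // /Rsc scalerA mulr_algl.
by rewrite ix_rscale !IH RscD -!RscM mulrC.
Qed.

Definition Hom (n : nat) (u : Raw) : Prop :=
  (n != 0%N -> u.1 = 0) /\ (forall l, (size l).+1 != n -> u.2 l = 0).

Lemma Hom_ix n x u : Hom n u -> Hom n.-1 (ix n x u).
Proof.
case: n => [|[|n]] [H1 H2]; split => //=.
by move=> l Hl; apply: H2.
Qed.

Lemma Hom_rz n : Hom n rz.
Proof. by []. Qed.

Lemma wl_p0 l q u v : Hom q v -> wl l 0 q u v = u.1 *: v.2 l.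
Proof.
elim: l q u v => [|x l IH] q u v Hv /=.
  case: q Hv => [|[|q]] [H1 H2] //=; by rewrite H2 ?scaler0.
rewrite wl_rzl Rsc0 add0r IH; last exact: Hom_ix.
case: q Hv => [|[|q]] [H1 H2] //=; rewrite ?H2 ?scaler0 //.
Qed.

Lemma wl_q0 l p u v : Hom p u -> wl l p 0 u v = v.1 *: u.2 l.
Proof.
elim: l p u v => [|x l IH] p u v Hu /=.
  case: p Hu => [|[|p]] [H1 H2] //=; by rewrite H2 ?scaler0.
rewrite wl_rzr addr0 Rsc1 IH; last exact: Hom_ix.
case: p Hu => [|[|p]] [H1 H2] //=; rewrite ?H2 ?scaler0 //.
Qed.

Lemma Hom_wedgeh p q u v : Hom (p + q) (wedgeh p q u v).
Proof.
split => /=; first by case: p => [|p] //; case: q.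
by move=> l Hl; rewrite wl_off.
Qed.

Lemma wedgeh_rzl p q v : wedgeh p q rz v = rz.
Proof. by apply: rawE => /= *; rewrite ?wl_rzl ?mul0r //; case: ifP. Qed.
Lemma wedgeh_rzr p q u : wedgeh p q u rz = rz.
Proof. by apply: rawE => /= *; rewrite ?wl_rzr ?mulr0 //; case: ifP. Qed.

Lemma leibniz p q x u v :
  ix (p + q) x (wedgeh p q u v)
  = radd (rscale (sg q) (wedgeh p.-1 q (ix p x u) v)) (wedgeh p q.-1 u (ix q x v)).
Proof.
case: p => [|[|p]]; case: q => [|[|q]].
all: apply: rawE => /= *.
all: rewrite ?wl_rzl ?wl_rzr ?mulr0 ?mul0r ?Rsc0 ?addr0 ?add0r ?gZl ?mulr0 //.
- by rewrite wl_off.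
- by rewrite /sg expr0 scale1r mul1r mulrC.
- by rewrite wl_off ?Rsc0.
Qed.


Lemma sgS n : sg n.+1 = - sg n.
Proof. by rewrite /sg exprS mulN1r. Qed.
Lemma sgD m n : sg (m + n) = sg m * sg n.
Proof. by rewrite /sg exprD. Qed.
Lemma sg_odd m n : odd m = odd n -> sg m = sg n.
Proof. by move=> H; rewrite /sg -signr_odd H signr_odd. Qed.
Lemma RscN c (x : E) : Rsc (- c) x = - Rsc c x.
Proof. by rewrite /Rsc scaleNr scaleNr. Qed.

Lemma wl_comm l p q u v : wl l p q u v = Rsc (sg (p * q)) (wl l q p v u).
Proof.
elim: l p q u v => [|x l IH] p q u v.
  by case: p => [|[|p]]; case: q => [|[|q]] => /=; rewrite ?Rsc0 ?muln0 ?mul0n /sg ?expr0 ?Rsc1.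
rewrite /= [wl l q.-1 _ _ _]IH [wl l q p.-1 _ _]IH RscD -!RscM addrC.
case: p => [|p]; first by rewrite /= !wl_rzl !Rsc0 !addr0 mul0n muln0 /sg expr0 !mulr1 Rsc1.
case: q => [|q]; first by rewrite /= !wl_rzr !Rsc0 !add0r muln0 mul0n /sg expr0 !mul1r Rsc1.
have -> : sg (p.+1 * q.+1) * sg p.+1 * sg (q.+1.-1 * p.+1) = 1.
  rewrite -!sgD (@sg_odd _ 0) /sg ?expr0 //= !oddD !oddM /=.
  by case: (odd p); case: (odd q).
have -> : sg (p.+1 * q.+1) * sg (q.+1 * p.+1.-1) = sg q.+1.
  rewrite -!sgD; apply: sg_odd; rewrite /= !oddD !oddM /=.
  by case: (odd p); case: (odd q).
by rewrite Rsc1.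
Qed.

Lemma wedgeh_comm p q u v : wedgeh p q u v = rscale (sg (p * q)) (wedgeh q p v u).
Proof.
apply: rawE => [|l] /=; last exact: wl_comm.
case: p => [|p]; case: q => [|q] //=; rewrite ?mulr0 //.
by rewrite /sg expr0 scale1r mul1r mulrC.
Qed.

Lemma wl_assoc l p q r a b c :
  wl l (p + q) r (wedgeh p q a b) c = wl l p (q + r) a (wedgeh q r b c).
Proof.
elim: l p q r a b c => [|x l IH] p q r a b c.
  case: p => [|[|p]]; case: q => [|[|q]]; case: r => [|[|r]] => /=;
  rewrite ?addSn ?addnS /= ?scaler0 ?scale0r ?mulr0 ?mul0r //.
  - by rewrite scalerA.
  - by rewrite !scalerA mulrC.
  - by rewrite scalerA mulrC.
rewrite /= leibniz wl_raddl wl_rscalel leibniz wl_raddr wl_rscaler !RscD -!RscM -addrA.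
congr (_ + _).
  case: p => [|p]; first by rewrite /= wedgeh_rzl !wl_rzl !Rsc0.
  by rewrite addSn /= IH sgD mulrC.
congr (_ + _).
  case: q => [|q]; first by rewrite /= wedgeh_rzr wedgeh_rzl wl_rzl wl_rzr !Rsc0.
  by rewrite addnS /= IH.
case: r => [|r]; first by rewrite /= wedgeh_rzr !wl_rzr.
by rewrite addnS /= IH.
Qed.


Lemma wedgeh_assoc p q r a b c :
  wedgeh (p + q) r (wedgeh p q a b) c = wedgeh p (q + r) a (wedgeh q r b c).
Proof.
apply: rawE => [|l] /=; last exact: wl_assoc.
case: p => [|p]; case: q => [|q]; case: r => [|r] //=; rewrite ?mulr0 ?mul0r //.
by rewrite mulrA.
Qed.

Lemma helper (V : zmodType) (a1 a2 b1 b2 c1 c2 : V) :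
  (a1 + - b1) + (b2 + c1) + ((a2 + - b2) + (b1 + c2)) = a1 + a2 + (c1 + c2).
Proof.
rewrite addrACA (addrACA a1) (addrACA b2) -opprD (addrC b2) addrA.
by rewrite -[a1 + a2 - (b1 + b2) + (b1 + b2)]addrA addNr addr0.
Qed.

Definition K (n : nat) (x y : E) (u : Raw) : Raw :=
  radd (ix n.-1 y (ix n x u)) (ix n.-1 x (ix n y u)).
Arguments K : simpl never.

Lemma sgK n : sg n * sg n = 1.
Proof. by rewrite -sgD (@sg_odd _ 0) /sg ?expr0 //= oddD; case: (odd n). Qed.

Lemma Kexp l p q x y u v :
  wl (x :: y :: l) p q u v + wl (y :: x :: l) p q u v
  = wl l p.-2 q (K p x y u) v + wl l p q.-2 u (K q x y v).
Proof.
rewrite /= /K wl_raddl wl_raddr !RscD -!RscM sgK !Rsc1.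
case: q => [|q].
  by rewrite /= !wl_rzr !Rsc0 !addr0.
rewrite /= sgS !RscN.
exact: helper.
Qed.


Hypothesis gsym : form_symmetric g.

Definition FML (F : seq E -> E) := forall l1 l2 c x y,
  F (l1 ++ (Rsc c x + y) :: l2) = Rsc c (F (l1 ++ x :: l2)) + F (l1 ++ y :: l2).
Definition Der2 (D : E -> E) :=
  exists d : A -> A, derivation d /\ forall a b, d (g a b) = g (D a) b + g a (D b).
Definition SWat (l1 : seq E) (F : seq E -> E) := forall l2 x y w,
  g (F (l1 ++ x :: y :: l2) + F (l1 ++ y :: x :: l2)) w
  = g (F (l1 ++ l2 ++ [:: w; x])) y + g (F (l1 ++ l2 ++ [:: w; y])) x.
Definition Coch (n : nat) (u : Raw) :=
  [/\ Hom n u, FML u.2, (forall l, Der2 (fun z => u.2 (rcons l z))) & (forall l1, SWat l1 u.2)].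

Lemma Der2_0 : Der2 (fun _ => 0).
Proof.
exists (fun _ => 0); split; first by split => *; rewrite ?mulr0 ?mul0r ?addr0.
by move=> a b; rewrite g0l g0r addr0.
Qed.

Lemma Der2_comb c D1 D2 : Der2 D1 -> Der2 D2 -> Der2 (fun z => Rsc c (D1 z) + D2 z).
Proof.
move=> [d1 [[L1 M1] H1]] [d2 [[L2 M2] H2]].
exists (fun a => c%:A * d1 a + d2 a); split; first split.
- move=> c' a b; rewrite L1 L2; ring.
- move=> a b; rewrite M1 M2; ring.
move=> a b; rewrite H1 H2 gDl gDr gRl gRr; ring.
Qed.

Lemma Der2_scale (a0 : A) D : Der2 D -> Der2 (fun z => a0 *: D z).
Proof.
move=> [d [[L M] H]].
exists (fun a => a0 * d a); split; first split.
- move=> c' a b; rewrite L; ring.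
- move=> a b; rewrite M; ring.
move=> a b; rewrite H gZl gZr; ring.
Qed.

Lemma SWat0 l1 : SWat l1 (fun _ => 0).
Proof. by move=> *; rewrite addr0 !g0l addr0. Qed.

Lemma FML0 : FML (fun _ => 0).
Proof. by move=> *; rewrite Rsc0 addr0. Qed.

Lemma Coch_rz n : Coch n rz.
Proof. split; [by split | exact: FML0 | move=> l; exact: Der2_0 | move=> l; exact: SWat0]. Qed.

Lemma Coch_ix n x u : Coch n u -> Coch n.-1 (ix n x u).
Proof.
case: n => [|[|n]] [H F D S]; first exact: Coch_rz.
  split; [by split | exact: FML0 | move=> l; exact: Der2_0 | move=> l; exact: SWat0].
split; first exact: (Hom_ix x H).
- by move=> l1; exact: (F (x :: l1)).
- by move=> l; exact: (D (x :: l)).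
- by move=> l1; exact: (S (x :: l1)).
Qed.


Lemma ix_linx n c x y u : FML u.2 ->
  ix n (Rsc c x + y) u = radd (rscale c (ix n x u)) (ix n y u).
Proof.
move=> F; case: n => [|[|n]]; apply: rawE => //= *; rewrite ?mulr0 ?Rsc0 ?addr0 //.
- by rewrite gDr gRr.
- exact: (F [::]).
Qed.

Lemma FML_ix n x u : FML u.2 -> FML (ix n x u).2.
Proof. by case: n => [|[|n]] F //=; [exact: FML0 | exact: FML0 | move=> l1; exact: (F (x :: l1))]. Qed.

Lemma wl_FML l1 l2 c x y p q u v : FML u.2 -> FML v.2 ->
  wl (l1 ++ (Rsc c x + y) :: l2) p q u v
  = Rsc c (wl (l1 ++ x :: l2) p q u v) + wl (l1 ++ y :: l2) p q u v.
Proof.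
elim: l1 p q u v => [|z l1 IH] p q u v Fu Fv /=.
  rewrite !ix_linx // wl_raddl wl_raddr wl_rscalel wl_rscaler !RscD -!RscM mulrC addrACA.
  done.
have Fu' := FML_ix p z Fu; have Fv' := FML_ix q z Fv.
by rewrite !IH // !RscD -!RscM mulrC addrACA.
Qed.

Lemma Der2_ext D1 D2 : (forall z, D1 z = D2 z) -> Der2 D1 -> Der2 D2.
Proof. by move=> H [d [Hd H1]]; exists d; split => // a b; rewrite -!H. Qed.

Lemma wl_Der2 l p q u v : Coch p u -> Coch q v -> Der2 (fun z => wl (rcons l z) p q u v).
Proof.
elim: l p q u v => [|x l IH] p q u v Cu Cv; last first.
  rewrite /=; apply: Der2_comb; apply: IH => //; exact: Coch_ix.
case: Cu => Hu Fu Du Su; case: Cv => Hv Fv Dv Sv.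
have [H2|H2] := eqVneq (p + q)%N 2; last first.
  by apply: (@Der2_ext (fun _ => 0)); [move=> z; rewrite wl_off // /= eq_sym | exact: Der2_0].
case: p H2 Hu Fu Du Su => [|[|[|p]]]; case: q Hv Fv Dv Sv => [|[|[|q]]] Hv Fv Dv Sv H2 Hu Fu Du Su.
all: try (exfalso; lia).
- apply: (@Der2_ext (fun z => u.1 *: v.2 [:: z])); first by move=> z; rewrite wl_p0.
  exact: Der2_scale (Dv [::]).
- apply: (@Der2_ext (fun z => Rsc (-1) (g (u.2 [::]) z *: v.2 [::]) + g (v.2 [::]) z *: u.2 [::])).
    by move=> z; rewrite /= /sg expr1.
  exists (fun _ => 0); split; first by split => *; rewrite ?mulr0 ?mul0r ?addr0.
  move=> a b; rewrite !RscN1 !gDl !gDr !gNl !gNr !gZl !gZr (gsym a (u.2 [::])) (gsym a (v.2 [::])).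
  ring.
- apply: (@Der2_ext (fun z => v.1 *: u.2 [:: z])); first by move=> z; rewrite wl_q0.
  exact: Der2_scale (Du [::]).
Qed.


Hypothesis gnd : strongly_nondegenerate g.

Lemma radd_rz : radd rz rz = rz.
Proof. by apply: rawE => /= *; rewrite addr0. Qed.

Lemma K_small n x y w : (n < 2)%N -> K n x y w = rz.
Proof. by case: n => [|[|n]] // _; rewrite /K /= radd_rz. Qed.

Lemma Kcomm p x y z u : Coch p u -> ix p.-2 z (K p x y u) = K p.-1 x y (ix p z u).
Proof.
case=> Hu Fu Du Su.
case: p Hu Fu Du Su => [|[|[|[|p]]]] Hu Fu Du Su; try by rewrite /= !K_small.
- rewrite /K; apply: rawE => /=; last by move=> *; rewrite addr0.
  by have := Su [::] [::] x y z; rewrite /= => ->.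
- rewrite /K; apply: rawE => /= [|m]; first by rewrite addr0.
  apply: gnd.1 => w.
  by have := Su [::] (z :: m) x y w; have := Su [:: z] m x y w; rewrite /= => -> ->.
Qed.


Lemma sgKsmall q l p U x y v :
  Rsc (sg q.-2) (wl l p q.-2 U (K q x y v)) = Rsc (sg q) (wl l p q.-2 U (K q x y v)).
Proof.
case: q => [|[|q]]; try by rewrite K_small // wl_rzr !Rsc0.
congr Rsc; apply: sg_odd => /=; by case: (odd q).
Qed.

Lemma EV l p q x y w u v : Coch p u -> Coch q v ->
  g (wl l p.-2 q (K p x y u) v + wl l p q.-2 u (K q x y v)) w
  = g (wl (l ++ [:: w; x]) p q u v) y + g (wl (l ++ [:: w; y]) p q u v) x.
Proof.
elim: l p q u v => [|z l IH] p q u v Cu Cv.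
  have [H3|H3] := eqVneq (p + q)%N 3; last first.
    have Z1 : wl [::] p.-2 q (K p x y u) v = 0.
      case: (ltnP p 2) => Hp; first by rewrite K_small // wl_rzl.
      apply: wl_off; rewrite /= -subn2; lia.
    have Z2 : wl [::] p q.-2 u (K q x y v) = 0.
      case: (ltnP q 2) => Hq; first by rewrite K_small // wl_rzr.
      apply: wl_off; rewrite /= -subn2; lia.
    by rewrite Z1 Z2 addr0 !wl_off ?g0l ?addr0 //= eq_sym.
  case: Cu => Hu Fu Du Su; case: Cv => Hv Fv Dv Sv.
  case: p H3 Hu Fu Du Su => [|[|[|[|p]]]] H3 Hu Fu Du Su;
  case: q H3 Hv Fv Dv Sv => [|[|[|[|q]]]] H3 Hv Fv Dv Sv; try (exfalso; lia).
  - rewrite [K 0 _ _ _]K_small // wl_rzl add0r !(@wl_p0 [:: w; _]) // /K /= !gZl -mulrDr.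
    by congr (_ * _); exact: (Sv [::] [::] x y w).
  - have s2 : sg 2 = 1 by rewrite /sg expr2 mulrNN mulr1.
    have s1 : sg 1 = -1 by rewrite /sg expr1.
    rewrite [K 1 _ _ _]K_small // wl_rzl add0r /K /= s1 s2 !Rsc0 ?addr0 ?add0r !Rsc1 !RscN1.
    do 4 rewrite ?gDl ?gNl ?gZl.
    set a1 := g (u.2 [::]) w; set a2 := g (u.2 [::]) x; set a3 := g (u.2 [::]) y.
    set b1 := g (v.2 [:: x]) y; set b2 := g (v.2 [:: y]) x; set b3 := g (v.2 [:: w]) y; set b4 := g (v.2 [:: w]) x.
    clearbody a1 a2 a3 b1 b2 b3 b4; ring.
  - have s2 : sg 2 = 1 by rewrite /sg expr2 mulrNN mulr1.
    have s1 : sg 1 = -1 by rewrite /sg expr1.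
    rewrite [K 1 _ _ _]K_small // wl_rzr addr0 /K /= /sg expr0 expr1 !Rsc1 !RscN1 ?addr0.
    do 4 rewrite ?gDl ?gNl ?gZl.
    set a1 := g (u.2 [:: x]) y; set a2 := g (u.2 [:: y]) x; set a3 := g (u.2 [:: w]) x.
    set a4 := g (u.2 [:: w]) y; set b1 := g (v.2 [::]) w; set b2 := g (v.2 [::]) x.
    set b3 := g (v.2 [::]) y.
    clearbody a1 a2 a3 a4 b1 b2 b3; ring.
  - rewrite [K 0 _ _ _]K_small // wl_rzr addr0 !(@wl_q0 [:: w; _]) // /K /= !gZl -mulrDr.
    by congr (_ * _); exact: (Su [::] [::] x y w).
rewrite /= (Kcomm x y z Cu) (Kcomm x y z Cv) sgKsmall.
have H1 := IH _ _ _ _ (Coch_ix z Cu) Cv; have H2 := IH _ _ _ _ Cu (Coch_ix z Cv).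
rewrite addrACA -RscD [LHS]gDl gRl H1 H2.
rewrite !gDl !gRl; ring.
Qed.


Lemma wl_SW l1 p q u v : Coch p u -> Coch q v -> SWat l1 (fun l => wl l p q u v).
Proof.
elim: l1 p q u v => [|z l1 IH] p q u v Cu Cv l2 x y w.
  by rewrite !cat0s Kexp EV.
have H1 := IH _ _ _ _ (Coch_ix z Cu) Cv l2 x y w.
have H2 := IH _ _ _ _ Cu (Coch_ix z Cv) l2 x y w.
rewrite /= in H1 H2 *.
rewrite addrACA -RscD [LHS]gDl gRl H1 H2 !gDl !gRl; ring.
Qed.

Lemma Coch_wedge p q u v : Coch p u -> Coch q v -> Coch (p + q) (wedgeh p q u v).
Proof.
move=> Cu Cv; split.
- exact: Hom_wedgeh.
- by move=> l1 l2 c x y; apply: wl_FML; [case: Cu | case: Cv].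
- by move=> l; apply: wl_Der2.
- by move=> l1; apply: wl_SW.
Qed.


Hypothesis gfull : form_full g.

Lemma der_add (d : A -> A) : derivation d -> forall a b, d (a + b) = d a + d b.
Proof. by case=> L _ a b; have := L 1 a b; rewrite scale1r !mul1r. Qed.

Lemma add_uniq (d1 d2 : A -> A) :
  (forall a b, d1 (a + b) = d1 a + d1 b) -> (forall a b, d2 (a + b) = d2 a + d2 b) ->
  (forall a b, d1 (g a b) = d2 (g a b)) -> forall a, d1 a = d2 a.
Proof.
move=> A1 A2 H a; have [s ->] := gfull a.
have z1 : d1 0 = 0.
  by have H0 := A1 0 0; rewrite addr0 in H0; have := subrr (d1 0); rewrite {1}H0 addrK.
have z2 : d2 0 = 0.
  by have H0 := A2 0 0; rewrite addr0 in H0; have := subrr (d2 0); rewrite {1}H0 addrK.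
elim: s => [|pr s IH]; first by rewrite !big_nil z1 z2.
by rewrite !big_cons A1 A2 IH H.
Qed.

Lemma triv_parts (C : Raw) : (forall l, (0 < size l)%N -> C.2 l = 0) ->
  [/\ FML C.2, (forall l, Der2 (fun z => C.2 (rcons l z))) & (forall l1, SWat l1 C.2)].
Proof.
move=> H; split.
- by move=> l1 l2 c x y; rewrite !H ?size_cat //= ?addnS // Rsc0 addr0.
- move=> l; apply: (@Der2_ext (fun _ => 0)); last exact: Der2_0.
  by move=> z; rewrite H // size_rcons.
- by move=> l1 l2 x y w; rewrite !H ?size_cat //= ?addnS // addr0 !g0l addr0.
Qed.

Lemma isC_Coch n C : isC g n C -> Coch n C.
Proof.
case: n => [|[|n]] /=.
- move=> H; have [F D S] := triv_parts (C := C) (fun l _ => H l).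
  by split => //; split => // l _; apply: H.
- move=> [H1 [H2 _]].
  have T : forall l, (0 < size l)%N -> C.2 l = 0 by move=> l Hl; apply: H2; case: l Hl.
  have [F D S] := triv_parts T.
  by split => //; split.
move=> [H1 [H2 /(_ isT) [ML [s [MD [Ds [S1 S2]]]]]]].
split; first by split.
- move=> l1 l2 c x y.
  have [Hs|Hs] := eqVneq (size l1 + size l2).+1 (n.+2 - 1)%N; first exact: ML.
  by rewrite !H2 ?size_cat //= ?addnS -?subn1 ?Rsc0 ?addr0 //; lia.
- move=> l; have [Hs|Hs] := eqVneq (size l).+2 n.+2.
    exists (s l); split; first exact: Ds.
    by move=> a b; rewrite S1.
  apply: (@Der2_ext (fun _ => 0)); last exact: Der2_0.
  by move=> z; rewrite H2 // size_rcons.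
- move=> l1 l2 x y w.
  have [Hs|Hs] := eqVneq (size l1 + size l2).+3 n.+2.
    rewrite S2 // S1; last by rewrite size_cat size_rcons; lia.
    by rewrite (gsym x) -!cats1 -!catA.
  by rewrite !H2 ?size_cat //= ?addnS ?addr0 ?g0l ?addr0 //; lia.
Qed.


Lemma Coch_isC n C : Coch n C -> isC g n C.
Proof.
case=> [[H1 H2] F D S].
case: n H1 H2 => [|k] H1 H2 /=; first by move=> l; apply: H2.
split; first exact: H1.
split; first exact: H2.
move=> _; split; first by move=> l1 l2 c x y _; apply: F.
pose s l := proj1_sig (constructive_indefinite_description _ (D l)).
have sP : forall l, derivation (s l) /\ forall a b, s l (g a b) = g (C.2 (rcons l a)) b + g a (C.2 (rcons l b)).
  move=> l; exact: (proj2_sig (constructive_indefinite_description _ (D l))).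
exists s; split; [|split; [|split]].
- move=> l1 l2 c x y a _.
  have [Dd Hd] := sP (l1 ++ (Rsc c x + y) :: l2).
  have [Dx Hx] := sP (l1 ++ x :: l2).
  have [Dy Hy] := sP (l1 ++ y :: l2).
  pose d2 := fun a => c%:A * s (l1 ++ x :: l2) a + s (l1 ++ y :: l2) a.
  apply: (@add_uniq _ d2 (der_add Dd)).
    by move=> a1 b1; rewrite /d2 (der_add Dx) (der_add Dy); ring.
  move=> a1 b1; rewrite /d2 Hd Hx Hy !rcons_cat /= !F !gDl !gDr !gRl !gRr; ring.
- by move=> l _; case: (sP l).
- by move=> l u w _; case: (sP l) => _ ->.
- move=> l1 l2 x y u _; case: (sP (l1 ++ rcons l2 u)) => _ ->.
  by rewrite S (gsym x) -!cats1 -!catA.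
Qed.


Definition comp (i : nat) (u : Raw) : Raw :=
  if i is k.+1 then (0, fun l => if size l == k then u.2 l else 0) else inA E u.1.

Definition wd (u v : Raw) : Raw :=
  (u.1 * v.1, fun l => \sum_(i < (size l).+2)
      wl l i ((size l).+1 - i) (comp i u) (comp ((size l).+1 - i) v)).

Lemma comp_hom p i u : Hom p u -> comp i u = if i == p then u else rz.
Proof.
case=> H1 H2; case: i => [|k] /=.
  case: eqP => [Hp|/eqP Hp]; last by apply: rawE => //=; rewrite H1 // eq_sym.
  by subst p; apply: rawE => //= l; rewrite H2.
case: eqP => [Hp|/eqP Hp]; apply: rawE => /= [|l].
- by subst p; rewrite H1.
- case: eqP => //= Hl.
  by subst p; rewrite H2 //; apply/eqP => -[] /Hl.
- by [].
- case: eqP => //= Hl.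
  by rewrite H2 // Hl.
Qed.

Lemma Hom_comp i u : Hom i (comp i u).
Proof.
case: i => [|k]; split => //= l Hl.
by case: eqP => // Hs; move: Hl; rewrite Hs eqxx.
Qed.

Lemma sum_if1 m p (X : E) :
  \sum_(i < m) (if (i : nat) == p then X else 0) = if (p < m)%N then X else 0.
Proof.
elim: m => [|m IH]; first by rewrite big_ord0.
rewrite big_ord_recr /= IH.
case: (ltngtP p m) => H.
- by rewrite addr0 ltnS ltnW.
- by rewrite addr0 ltnS leqNgt H.
- by rewrite add0r H ltnSn.
Qed.

Lemma wd_hom p q u v : Hom p u -> Hom q v -> wd u v = wedgeh p q u v.
Proof.
move=> Hu Hv; apply: rawE => [|l] /=.
  case: p Hu => [|p] [H1 _]; last by rewrite H1 // mul0r.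
  case: q Hv => [|q] [H2 _] //; by rewrite H2 // mulr0.
rewrite (eq_bigr (fun i : 'I_(size l).+2 =>
   if (i : nat) == p then (if ((size l).+1 - p == q)%N then wl l p q u v else 0) else 0)); last first.
  move=> i _; rewrite !(comp_hom _ Hu) !(comp_hom _ Hv).
  case: eqP => [->|_]; last by rewrite wl_rzl.
  by case: eqP => [->|_]; rewrite ?wl_rzr.
rewrite sum_if1.
have [Hs|Hs] := eqVneq (size l).+1 (p + q)%N.
  have -> : ((size l).+1 - p == q)%N by apply/eqP; lia.
  by have -> : (p < (size l).+2)%N by lia.
by rewrite wl_off //; case: ifP => //; case: ifP.
Qed.

Lemma comp_radd i u v : comp i (radd u v) = radd (comp i u) (comp i v).
Proof. case: i => [|k]; apply: rawE => //= *; rewrite ?addr0 //; by case: ifP; rewrite ?addr0. Qed.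

Lemma comp_rscale i c u : comp i (rscale c u) = rscale c (comp i u).
Proof. case: i => [|k]; apply: rawE => //= *; rewrite ?mulr0 ?Rsc0 //; by case: ifP; rewrite ?Rsc0. Qed.

Lemma wd_raddl u1 u2 v : wd (radd u1 u2) v = radd (wd u1 v) (wd u2 v).
Proof.
apply: rawE => [|l] /=; first by rewrite mulrDl.
by rewrite -big_split /=; apply: eq_bigr => i _; rewrite comp_radd wl_raddl.
Qed.
Lemma wd_raddr u v1 v2 : wd u (radd v1 v2) = radd (wd u v1) (wd u v2).
Proof.
apply: rawE => [|l] /=; first by rewrite mulrDr.
by rewrite -big_split /=; apply: eq_bigr => i _; rewrite comp_radd wl_raddr.
Qed.
Lemma wd_rscalel c u v : wd (rscale c u) v = rscale c (wd u v).
Proof.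
apply: rawE => [|l] /=; first by rewrite mulrA.
by rewrite /Rsc scaler_sumr; apply: eq_bigr => i _; rewrite comp_rscale wl_rscalel.
Qed.
Lemma wd_rscaler c u v : wd u (rscale c v) = rscale c (wd u v).
Proof.
apply: rawE => [|l] /=; first by rewrite mulrCA.
by rewrite /Rsc scaler_sumr; apply: eq_bigr => i _; rewrite comp_rscale wl_rscaler.
Qed.

Fixpoint sumR (n : nat) (F : nat -> Raw) : Raw :=
  if n is k.+1 then radd (sumR k F) (F k) else rz.

Lemma sumR_ext n F G : (forall i, F i = G i) -> sumR n F = sumR n G.
Proof. by move=> H; elim: n => //= n ->; rewrite H. Qed.

Lemma sumR_comp m u :
  (sumR m (comp^~ u)).1 = (if (0 < m)%N then u.1 else 0) /\
  forall l, (sumR m (comp^~ u)).2 l = if ((size l).+1 < m)%N then u.2 l else 0.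
Proof.
elim: m => [|m [IH1 IH2]] //=; split.
  by rewrite IH1; case: m {IH1 IH2} => [|m] /=; rewrite ?add0r ?addr0.
move=> l; rewrite IH2; case: m {IH1 IH2} => [|m] /=; first by rewrite addr0.
case: eqP => [->|Hs]; first by rewrite ltnn add0r ltnSn.
rewrite addr0; have -> : ((size l).+1 < m.+2)%N = ((size l).+1 < m.+1)%N.
  by apply/idP/idP; lia.
done.
Qed.

Lemma decomp u N : (forall l, (N <= size l)%N -> u.2 l = 0) -> u = sumR N.+1 (comp^~ u).
Proof.
move=> H; have [H1 H2] := sumR_comp N.+1 u; apply: rawE => [|l]; first by rewrite H1.
rewrite H2 ltnS; case: ltnP => // Hl; by rewrite H.
Qed.

Lemma sumR_distl (P : Raw -> Prop) (f : Raw -> Raw -> Raw) n F c :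
  (forall a b, P a -> P b -> f (radd a b) c = radd (f a c) (f b c)) ->
  f rz c = rz -> P rz -> (forall a b, P a -> P b -> P (radd a b)) -> (forall i, P (F i)) ->
  f (sumR n F) c = sumR n (fun i => f (F i) c).
Proof.
move=> L Z Pz PD PF; elim: n => //= n IH.
have Pn : P (sumR n F) by elim: n {IH} => //= n IH; apply: PD.
by rewrite L // IH.
Qed.

Lemma sumR_distr (P : Raw -> Prop) (f : Raw -> Raw -> Raw) n F c :
  (forall a b, P a -> P b -> f c (radd a b) = radd (f c a) (f c b)) ->
  f c rz = rz -> P rz -> (forall a b, P a -> P b -> P (radd a b)) -> (forall i, P (F i)) ->
  f c (sumR n F) = sumR n (fun i => f c (F i)).
Proof.
move=> L Z Pz PD PF; elim: n => //= n IH.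
have Pn : P (sumR n F) by elim: n {IH} => //= n IH; apply: PD.
by rewrite L // IH.
Qed.

Lemma comp_rz i : comp i rz = rz.
Proof. by case: i => [|k] //; apply: rawE => //= l; case: ifP. Qed.

Lemma wd_rzl v : wd rz v = rz.
Proof.
apply: rawE => [|l] /=; first by rewrite mul0r.
by rewrite big1 // => i _; rewrite comp_rz wl_rzl.
Qed.
Lemma wd_rzr v : wd v rz = rz.
Proof.
apply: rawE => [|l] /=; first by rewrite mulr0.
by rewrite big1 // => i _; rewrite comp_rz wl_rzr.
Qed.


Lemma Coch_radd n u v : Coch n u -> Coch n v -> Coch n (radd u v).
Proof.
case=> [[Hu1 Hu2] Fu Du Su] [[Hv1 Hv2] Fv Dv Sv]; split.
- split => /= [H|l Hl]; first by rewrite Hu1 ?Hv1 ?addr0.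
  by rewrite Hu2 ?Hv2 ?addr0.
- by move=> l1 l2 c x y /=; rewrite Fu Fv RscD addrACA.
- move=> l; apply: (@Der2_ext (fun z => Rsc 1 (u.2 (rcons l z)) + v.2 (rcons l z))).
    by move=> z; rewrite Rsc1.
  exact: Der2_comb.
- move=> l1 l2 x y w /=.
  by rewrite [u.2 _ + v.2 _ + _]addrACA [LHS]gDl Su Sv !gDl addrACA.
Qed.

Lemma Hom_of n C : isC g n C -> Hom n C.
Proof. by move/isC_Coch; case. Qed.

Lemma isC_inCdot n C : isC g n C -> inCdot g C.
Proof.
move=> HC; have Hh := Hom_of HC; split.
  exists n => l Hl; case: Hh => _ H2; apply: H2; apply/eqP; lia.
move=> k; change (isC g k.+1 (comp k.+1 C)); rewrite (comp_hom _ Hh).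
case: eqP => [Hk|_]; first by rewrite Hk.
apply: Coch_isC; exact: Coch_rz.
Qed.

Lemma inCdot_isC i u : inCdot g u -> isC g i (comp i u).
Proof. by case: i => [|k] [_ H] //. Qed.

Lemma inCdot_rz : inCdot g rz.
Proof. apply: (@isC_inCdot 0); apply: Coch_isC; exact: Coch_rz. Qed.

Lemma inCdot_radd u v : inCdot g u -> inCdot g v -> inCdot g (radd u v).
Proof.
move=> [[Nu Bu] Cu] [[Nv Bv] Cv]; split.
  exists (maxn Nu Nv) => l Hl /=; rewrite Bu ?Bv ?addr0 //; lia.
move=> k; change (isC g k.+1 (comp k.+1 (radd u v))); rewrite comp_radd.
apply: Coch_isC; apply: Coch_radd; apply: isC_Coch; [exact: (Cu k) | exact: (Cv k)].
Qed.

Lemma inCdot_comp i u : inCdot g u -> inCdot g (comp i u).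
Proof. move=> H; exact: isC_inCdot (inCdot_isC i H). Qed.

Lemma rscale1 (u : Raw) : rscale 1 u = u.
Proof. by apply: rawE => [|l] /=; rewrite ?Rsc1 // scale1r mul1r. Qed.

Lemma radd_self (X : Raw) : X = radd X X -> X = rz.
Proof.
move=> H; apply: rawE => [|l] /=.
  by have := subrr X.1; rewrite {1}H /= addrK.
by have := subrr (X.2 l); rewrite {1}H /= addrK.
Qed.

Lemma bi_ext (P : Raw -> Prop) (f h : Raw -> Raw -> Raw) u v Nu Nv :
  (forall l, (Nu <= size l)%N -> u.2 l = 0) -> (forall l, (Nv <= size l)%N -> v.2 l = 0) ->
  P rz -> (forall a b, P a -> P b -> P (radd a b)) -> (forall i, P (comp i u)) -> (forall i, P (comp i v)) ->
  (forall a b c, P a -> P b -> P c -> f (radd a b) c = radd (f a c) (f b c) /\ f c (radd a b) = radd (f c a) (f c b)) ->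
  (forall a b c, P a -> P b -> P c -> h (radd a b) c = radd (h a c) (h b c) /\ h c (radd a b) = radd (h c a) (h c b)) ->
  (forall c, P c -> f rz c = rz /\ f c rz = rz) -> (forall c, P c -> h rz c = rz /\ h c rz = rz) ->
  (forall i j, f (comp i u) (comp j v) = h (comp i u) (comp j v)) -> f u v = h u v.
Proof.
move=> Bu Bv Pz PD Pu Pv Lf Lh Zf Zh H.
rewrite (decomp Bu) (decomp Bv).
have PS : forall n (F : nat -> Raw), (forall i, P (F i)) -> P (sumR n F).
  by move=> n F PF; elim: n => //= n IH; apply: PD.
rewrite (@sumR_distl P f _ _ _ (fun a b Pa Pb => (Lf a b _ Pa Pb (PS _ _ Pv)).1)
  (Zf _ (PS _ _ Pv)).1 Pz PD Pu).
rewrite (@sumR_distl P h _ _ _ (fun a b Pa Pb => (Lh a b _ Pa Pb (PS _ _ Pv)).1)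
  (Zh _ (PS _ _ Pv)).1 Pz PD Pu).
apply: sumR_ext => i.
rewrite (@sumR_distr P f _ _ _ (fun a b Pa Pb => (Lf a b _ Pa Pb (Pu i)).2)
  (Zf _ (Pu i)).2 Pz PD Pv).
rewrite (@sumR_distr P h _ _ _ (fun a b Pa Pb => (Lh a b _ Pa Pb (Pu i)).2)
  (Zh _ (Pu i)).2 Pz PD Pv).
by apply: sumR_ext => j.
Qed.


Lemma uni_ext (phi psi : Raw -> Raw) u N :
  (forall l, (N <= size l)%N -> u.2 l = 0) ->
  (forall a b, phi (radd a b) = radd (phi a) (phi b)) -> phi rz = rz ->
  (forall a b, psi (radd a b) = radd (psi a) (psi b)) -> psi rz = rz ->
  (forall i, phi (comp i u) = psi (comp i u)) -> phi u = psi u.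
Proof.
move=> Bu Lp Zp Lq Zq H; rewrite (decomp Bu).
have SL : forall (f : Raw -> Raw) n F, (forall a b, f (radd a b) = radd (f a) (f b)) -> f rz = rz ->
    f (sumR n F) = sumR n (fun i => f (F i)).
  by move=> f n F Lf Zf; elim: n => //= n IH; rewrite Lf IH.
by rewrite (SL phi) // (SL psi) //; apply: sumR_ext.
Qed.

Lemma wd_assoc u v w : inCdot g u -> inCdot g v -> inCdot g w ->
  wd (wd u v) w = wd u (wd v w).
Proof.
move=> [[Nu Bu] _] [[Nv Bv] _] [[Nw Bw] _].
apply: (@bi_ext (fun _ => True) (fun a b => wd (wd a b) w) (fun a b => wd a (wd b w)) u v Nu Nv) => //.
- by move=> a b c _ _ _; rewrite /= !wd_raddl !wd_raddr wd_raddl.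
- by move=> a b c _ _ _; rewrite /= !wd_raddl !wd_raddr.
- by move=> c _; rewrite /= !wd_rzl !wd_rzr wd_rzl.
- by move=> c _; rewrite /= !wd_rzl !wd_rzr.
move=> i j.
apply: (@uni_ext (fun c => wd (wd (comp i u) (comp j v)) c) (fun c => wd (comp i u) (wd (comp j v) c)) w Nw) => //.
- by move=> a b; rewrite /= !wd_raddr.
- by rewrite /= !wd_rzr.
- by move=> a b; rewrite /= !wd_raddr.
- by rewrite /= !wd_rzr.
move=> k /=.
rewrite !(wd_hom (Hom_comp _ _) (Hom_comp _ _)).
rewrite (wd_hom (Hom_wedgeh _ _ _ _) (Hom_comp _ _)) (wd_hom (Hom_comp _ _) (Hom_wedgeh _ _ _ _)).
exact: wedgeh_assoc.
Qed.

Variable br : Raw -> Raw -> Raw.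
Hypothesis Hbr : is_bracket g br.

Lemma br_ix r C x : isC g r C -> br C (Defs.inE x) = ix r x C.
Proof.
have [_ [_ [_ [_ [B5 [B6 [_ [B8 _]]]]]]]] := Hbr.
case: r => [|[|r]] HC.
- have -> : C = inA E C.1 by apply: rawE => //= l; apply: HC.
  by rewrite (B5 C.1 x).1.
- have -> : C = Defs.inE (C.2 [::]).
    apply: rawE => /=; first by case: HC.
    by case=> [|z l] //; case: HC => _ [H _]; apply: H.
  by rewrite B6.
- by rewrite (B8 r.+2 C x isT HC).1.
Qed.


Lemma Hom0_inA (u : Raw) : Hom 0 u -> u = inA E u.1.
Proof. by case=> _ H; apply: rawE => //= l; apply: H. Qed.

Lemma Hom1_inE (u : Raw) : Hom 1 u -> u = Defs.inE (u.2 [::]).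
Proof. by case=> H1 H2; apply: rawE => /= [|[|z l]] //; [apply: H1 | apply: H2]. Qed.

Lemma Hom_inA a : Hom 0 (inA E a).
Proof. by []. Qed.
Lemma Hom_inE x : Hom 1 (Defs.inE x).
Proof. by split => // -[|z l]. Qed.

Lemma wdp_rz wd' : is_wedge g br wd' -> forall b, inCdot g b -> wd' rz b = rz /\ wd' b rz = rz.
Proof.
case=> L _ b Hb; have [E1 E2] := L 1 rz rz b inCdot_rz inCdot_rz Hb.
rewrite rscale1 radd_rz !rscale1 in E1 E2.
by split; apply: radd_self.
Qed.

Lemma wdp_radd wd' : is_wedge g br wd' -> forall a b c, inCdot g a -> inCdot g b -> inCdot g c ->
  wd' (radd a b) c = radd (wd' a c) (wd' b c) /\ wd' c (radd a b) = radd (wd' c a) (wd' c b).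
Proof.
case=> L _ a b c Ha Hb Hc; have [E1 E2] := L 1 a b c Ha Hb Hc.
by rewrite !rscale1 in E1 E2.
Qed.

Lemma uniq_hom wd' : is_wedge g br wd' ->
  forall n i j a b, (i + j)%N = n -> Coch i a -> Coch j b -> wd' a b = wedgeh i j a b.
Proof.
move=> Hw; have [L [Deg [_ [_ [P5 [P6 P7]]]]]] := Hw.
have [_ [_ [_ [_ [_ [_ [_ [B8 _]]]]]]]] := Hbr.
elim/ltn_ind => n IH i j a b Hn Ca Cb.
have Ia := Coch_isC Ca; have Ib := Coch_isC Cb.
have Ha := Hom_of Ia; have Hb := Hom_of Ib.
have [Hn2|Hn2] := leqP 2 n.
  have IW := Deg _ _ _ _ Ia Ib; rewrite Hn in IW.
  have HW := Hom_of IW; have HW' := Hom_wedgeh i j a b; rewrite Hn in HW'.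
  apply: rawE => [|[|x m]].
  - by rewrite HW.1 ?HW'.1 //; rewrite -lt0n; lia.
  - by rewrite HW.2 ?HW'.2 //=; apply/eqP; lia.
  have -> : (wd' a b).2 (x :: m) = (ins x (wd' a b)).2 m by [].
  rewrite -(B8 n (wd' a b) x Hn2 IW).1.
  have := P7 i j a b x Ia Ib; rewrite (br_ix x Ia) (br_ix x Ib) => ->.
  have Ea : wd' (ix i x a) b = wedgeh i.-1 j (ix i x a) b.
    clear HW'; case: i Hn Ca Ia Ha => [|i] Hn Ca Ia Ha.
      by rewrite /= (wdp_rz Hw (isC_inCdot Ib)).1 wedgeh_rzl.
    apply: (IH (i + j)%N) => //; first lia.
    exact: (Coch_ix x Ca).
  have Eb : wd' a (ix j x b) = wedgeh i j.-1 a (ix j x b).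
    clear HW' Ea; case: j Hn Cb Ib Hb => [|j] Hn Cb Ib Hb.
      by rewrite /= (wdp_rz Hw (isC_inCdot Ia)).2 wedgeh_rzr.
    apply: (IH (i + j)%N) => //; first lia.
    exact: (Coch_ix x Cb).
  by rewrite Ea Eb.
case: i j Hn Ca Cb Ia Ib Ha Hb => [|[|i]] [|[|j]] Hn Ca Cb Ia Ib Ha Hb; try (exfalso; lia).
- rewrite (Hom0_inA Ha) (Hom0_inA Hb) (P5 a.1 b.1).1.
  by apply: rawE => //= l; rewrite wl_off.
- rewrite (Hom0_inA Ha) (Hom1_inE Hb) (P6 a.1 (b.2 [::])).1.
  by apply: rawE => //= -[|z l] //; rewrite wl_off.
- rewrite (Hom1_inE Ha) (Hom0_inA Hb) (P6 b.1 (a.2 [::])).2.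
  by apply: rawE => //= -[|z l] //; rewrite wl_off.
Qed.

Theorem main_sec : exists wd0, is_wedge g br wd0 /\
  (forall wd', is_wedge g br wd' -> forall u v, inCdot g u -> inCdot g v -> wd' u v = wd0 u v).
Proof.
exists wd; split.
  split; [|split; [|split; [|split; [|split; [|split]]]]].
  - by move=> c u v w _ _ _; split; [rewrite wd_raddl wd_rscalel | rewrite wd_raddr wd_rscaler].
  - move=> r s u v Hu Hv; rewrite (wd_hom (Hom_of Hu) (Hom_of Hv)).
    by apply: Coch_isC; apply: Coch_wedge; exact: isC_Coch.
  - exact: wd_assoc.
  - move=> r s u v Hu Hv.
    rewrite (wd_hom (Hom_of Hu) (Hom_of Hv)) (wd_hom (Hom_of Hv) (Hom_of Hu)).
    exact: wedgeh_comm.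
  - move=> a b; rewrite !(wd_hom (Hom_inA _) (Hom_inA _)).
    by split; apply: rawE => /= [|l]; rewrite ?wl_off // mulrC.
  - move=> a x; rewrite (wd_hom (Hom_inA _) (Hom_inE _)) (wd_hom (Hom_inE _) (Hom_inA _)).
    by split; apply: rawE => //= -[|z l] //; rewrite wl_off.
  - move=> r s C1 C2 x H1 H2.
    rewrite (wd_hom (Hom_of H1) (Hom_of H2)).
    rewrite (br_ix x (Coch_isC (Coch_wedge (isC_Coch H1) (isC_Coch H2)))) leibniz.
    rewrite (br_ix x H1) (br_ix x H2).
    by rewrite (wd_hom (Hom_ix x (Hom_of H1)) (Hom_of H2)) (wd_hom (Hom_of H1) (Hom_ix x (Hom_of H2))).
move=> wd' Hw u v Hu Hv.
have [[Nu Bu] _] := Hu; have [[Nv Bv] _] := Hv.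
apply: (@bi_ext (inCdot g) wd' wd u v Nu Nv) => //.
- exact: inCdot_rz.
- exact: inCdot_radd.
- by move=> i; exact: inCdot_comp.
- by move=> i; exact: inCdot_comp.
- exact: wdp_radd.
- by move=> a b c _ _ _; rewrite wd_raddl wd_raddr.
- exact: wdp_rz.
- by move=> c _; rewrite wd_rzl wd_rzr.
move=> i j.
rewrite (uniq_hom Hw (erefl _) (isC_Coch (inCdot_isC i Hu)) (isC_Coch (inCdot_isC j Hv))).
by rewrite (wd_hom (Hom_comp _ _) (Hom_comp _ _)).
Qed.

End W.

Unset Implicit Arguments.

Theorem mainTheorem7 (R : comUnitRingType) (A : comAlgType R) (E : lmodType A)
  (g : E -> E -> A) (br : Raw A E -> Raw A E -> Raw A E) :
  Qalgebra R -> fgprojective E ->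
  form_bilinear g -> form_symmetric g -> strongly_nondegenerate g -> form_full g ->
  is_bracket g br ->
  exists wd : Raw A E -> Raw A E -> Raw A E,
    is_wedge g br wd /\
    (forall wd', is_wedge g br wd' ->
       forall u v, inCdot g u -> inCdot g v -> wd' u v = wd u v).
Proof.
move=> _ _ gbil gsym gnd gfull Hbr.
exact: (main_sec gbil gsym gnd gfull Hbr).
Qed.
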